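(* For all integers $m,n\ge 0$, the bubble lattice $\mathrm{Bub}(m,n)$ has order dimension $m+n$.
   Context: For a finite directed graph $G$ without multiple edges, a maximal orthogonal pair is a pair $(X,Y)$ of disjoint vertex subsets with no edge from $X$ to $Y$, maximal for this property; ordered by $(X,Y)\le(X',Y')$ iff $X\subseteq X'$ they form a lattice $L(G)$. Let $X=\{x_1,\dots,x_m\}$, $Y=\{y_1,\dots,y_n\}$ be disjoint alphabets. $\mathrm{Bub}(m,n):=L(G)$ where $G$ has vertex set $X\sqcup Y\sqcup(X\times Y)$ and an edge $l_1\to l_2$ ($l_1\neq l_2$) exactly when: $l_1=(x_s,y_t)$ and $l_2=x_s$; or $l_1=y_t$ and $l_2=(x_s,y_t)$; or $l_1=(x_s,y_t)$, $l_2=(x_{s'},y_{t'})$ with $s\ge s'$ and $t\le t'$ (equivalently, $\mathrm{Bub}(m,n)$ is the extremal lattice with this Galois graph). The order dimension of a poset is the least $d$ such that it embeds as a subposet of $\mathbb R^d$ with the componentwise order. *)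

(* Defs.v *)
From mathcomp Require Import all_boot.
From Stdlib Require Import Reals.
Set Implicit Arguments. Unset Strict Implicit. Unset Printing Implicit Defensive.

Definition orthogonal_pair (V : finType) (e : rel V) (A B : {set V}) : bool :=
  [disjoint A & B] && [forall a in A, forall b in B, ~~ e a b].

Definition maximal_orthogonal_pair (V : finType) (e : rel V) (A B : {set V}) : Prop :=
  orthogonal_pair e A B /\
  forall A' B' : {set V}, orthogonal_pair e A' B' ->
    A \subset A' -> B \subset B' -> A' = A /\ B' = B.

(* L(G): elements are the maximal orthogonal pairs, ordered by
   (X,Y) <= (X',Y') iff X \subset X'. *)
Definition LG_le (V : finType) (p q : {set V} * {set V}) : bool := p.1 \subset q.1.

Definition LG_embeds_in (V : finType) (e : rel V) (d : nat) : Prop :=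
  exists f : {set V} * {set V} -> ('I_d -> R),
    forall p q : {set V} * {set V},
      maximal_orthogonal_pair e p.1 p.2 -> maximal_orthogonal_pair e q.1 q.2 ->
      (LG_le p q <-> forall i : 'I_d, Rle (f p i) (f q i)).

Definition LG_order_dimension (V : finType) (e : rel V) (d : nat) : Prop :=
  LG_embeds_in e d /\ forall d', LG_embeds_in e d' -> d <= d'.

(* Vertices of the Galois graph of Bub(m,n):
   inl (inl s) = x_s, inl (inr t) = y_t, inr (s,t) = (x_s, y_t). *)
Definition bub_vertex (m n : nat) : finType := ('I_m + 'I_n + 'I_m * 'I_n)%type.

Definition bub_edge (m n : nat) : rel (bub_vertex m n) :=
  fun l1 l2 =>
    (l1 != l2) &&
    match l1, l2 with
    | inr (s, t), inl (inl s') => s == s'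
    | inl (inr t), inr (s, t') => t == t'
    | inr (s, t), inr (s', t') => (s' <= s) && (t <= t')
    | _, _ => false
    end.

(* Main.v *)
Require Import Defs.
From mathcomp Require Import all_boot.
From Stdlib Require Import Reals.
From Stdlib Require Import Classical Lra.
From mathcomp Require Import zify.

Set Implicit Arguments. Unset Strict Implicit. Unset Printing Implicit Defensive.

Section Gen.
Variables (V : finType) (e : rel V).

Lemma orthoP (A B : {set V}) :
  reflect ((forall x, x \in A -> x \in B -> False) /\
           (forall a b, a \in A -> b \in B -> ~~ e a b))
          (orthogonal_pair e A B).
Proof.
rewrite /orthogonal_pair disjoint_subset.
apply: (iffP andP) => [[/subsetP Hd /forall_inP Ho] | [Hd Ho]]; split.
- by move=> x xA xB; have := Hd x xA; rewrite inE xB.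
- by move=> a b aA bB; have /forall_inP := Ho a aA; apply.
- by apply/subsetP => x xA; rewrite inE; apply/negP; apply: Hd.
- by apply/forall_inP => a aA; apply/forall_inP => b bB; apply: Ho.
Qed.

Lemma add_vertex X Y u v : maximal_orthogonal_pair e X Y -> u \in X -> e u v ->
  (forall w, e v w -> e u w) -> v \in X.
Proof.
case=> /orthoP [Hd Ho] Hmax uX euv Hvw.
have : orthogonal_pair e (v |: X) Y.
  apply/orthoP; split.
  - move=> x; rewrite in_setU1 => /orP [/eqP -> | xX] xY.
      by have := Ho _ _ uX xY; rewrite euv.
    exact: Hd xX xY.
  - move=> a b; rewrite in_setU1 => /orP [/eqP -> | aX] bY.
      by apply/negP => evb; have := Ho _ _ uX bY; rewrite Hvw.
    exact: Ho.
move/Hmax; case/(_ (subsetUr _ _) (subxx _)) => <- _.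
by rewrite setU11.
Qed.

Lemma a_max v (Hv : forall w, e v w -> exists z, [/\ e w z, z != v & ~~ e v z]) :
  maximal_orthogonal_pair e [set v] [set w | (w != v) && ~~ e v w].
Proof.
split.
  apply/orthoP; split.
    by move=> x; rewrite in_set1 inE => /eqP ->; rewrite eqxx.
  by move=> a b; rewrite in_set1 inE => /eqP -> /andP[].
move=> X' Y' /orthoP [Hd Ho] sX sY.
have vX : v \in X' by apply: (subsetP sX); rewrite in_set1.
split; last first.
  apply/setP => w; apply/idP/idP; last by apply: (subsetP sY).
  move=> wY; rewrite inE; apply/andP; split; last exact: Ho vX wY.
  by apply/negP => /eqP wv; subst; exact: Hd vX wY.
apply/setP => w; rewrite in_set1; apply/idP/idP; last by move/eqP->.
move=> wX; apply/negPn/negP => wv.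
case: (boolP (e v w)) => evw.
  case: (Hv _ evw) => z [ewz zv nevz].
  have zY : z \in Y' by apply: (subsetP sY); rewrite inE zv nevz.
  by have := Ho _ _ wX zY; rewrite ewz.
have wY : w \in Y' by apply: (subsetP sY); rewrite inE wv evw.
exact: Hd wX wY.
Qed.

Lemma b_max v (Hv : forall w, e w v -> exists z, [/\ e z w, z != v & ~~ e z v]) :
  maximal_orthogonal_pair e [set w | (w != v) && ~~ e w v] [set v].
Proof.
split.
  apply/orthoP; split.
    by move=> x; rewrite in_set1 inE => /andP[/negbTE ->].
  by move=> a b; rewrite in_set1 inE => /andP[_ H] /eqP ->.
move=> X' Y' /orthoP [Hd Ho] sX sY.
have vY : v \in Y' by apply: (subsetP sY); rewrite in_set1.
split.
  apply/setP => w; apply/idP/idP; last by apply: (subsetP sX).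
  move=> wX; rewrite inE; apply/andP; split; last exact: Ho wX vY.
  by apply/negP => /eqP wv; subst; exact: Hd wX vY.
apply/setP => w; rewrite in_set1; apply/idP/idP; last by move/eqP->.
move=> wY; apply/negPn/negP => wv.
case: (boolP (e w v)) => ewv.
  case: (Hv _ ewv) => z [ezw zv nezv].
  have zX : z \in X' by apply: (subsetP sX); rewrite inE zv nezv.
  by have := Ho _ _ zX wY; rewrite ezw.
have wX : w \in X' by apply: (subsetP sX); rewrite inE wv ewv.
exact: Hd wX wY.
Qed.

Definition rltb (x y : R) : bool := if Rlt_dec x y then true else false.
Lemma rltbP x y : reflect (Rlt x y) (rltb x y).
Proof. by rewrite /rltb; case: Rlt_dec => H; constructor. Qed.

Lemma lower k d (g : 'I_k -> V) (ginj : injective g)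
  (Ha : forall i w, e (g i) w -> exists z, [/\ e w z, z != g i & ~~ e (g i) z])
  (Hb : forall i w, e w (g i) -> exists z, [/\ e z w, z != g i & ~~ e z (g i)])
  (Hne : forall i j, ~~ e (g i) (g j)) :
  LG_embeds_in e d -> k <= d.
Proof.
case=> f Hf.
pose A i := ([set g i], [set w | (w != g i) && ~~ e (g i) w]).
pose B i := ([set w | (w != g i) && ~~ e w (g i)], [set g i]).
have maxA i : maximal_orthogonal_pair e (A i).1 (A i).2 := a_max (Ha i).
have maxB i : maximal_orthogonal_pair e (B i).1 (B i).2 := b_max (Hb i).
have leAB i j : LG_le (A i) (B j) = (i != j).
  by rewrite /LG_le /= sub1set inE Hne andbT (inj_eq ginj).
have ex i : exists c, rltb (f (B i) c) (f (A i) c).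
  have H : ~ (forall c, Rle (f (A i) c) (f (B i) c)).
    by move/(Hf _ _ (maxA i) (maxB i)); rewrite leAB eqxx.
  apply: NNPP => H1; apply: H => c; apply: Rnot_lt_le => H2.
  by apply: H1; exists c; apply/rltbP.
pose c i := xchoose (ex i).
have cinj : injective c.
  move=> i j cij; apply/eqP; apply/negPn/negP => nij.
  have /rltbP Hi := xchooseP (ex i).
  have /rltbP Hj := xchooseP (ex j).
  have H1 : forall c, Rle (f (A i) c) (f (B j) c).
    by apply/(Hf _ _ (maxA i) (maxB j)); rewrite leAB.
  have H2 : forall c, Rle (f (A j) c) (f (B i) c).
    by apply/(Hf _ _ (maxA j) (maxB i)); rewrite leAB eq_sym.
  have Hj' : Rlt (f (B j) (c i)) (f (A j) (c i)) by rewrite cij.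
  have := H1 (c i); have := H2 (c i); move: Hi Hj'; rewrite -/(c i).
  lra.
by have := leq_card c cinj; rewrite !card_ord.
Qed.

End Gen.
Section Bub.
Variables m n : nat.
Local Notation V := (bub_vertex m n).
Local Notation e := (@bub_edge m n).
Definition xv (s : 'I_m) : V := inl (inl s).
Definition yv (t : 'I_n) : V := inl (inr t).
Definition pv (s : 'I_m) (t : 'I_n) : V := inr (s, t).

Lemma e_xw s w : e (xv s) w = false.
Proof. by case: w => [[?|?]|[??]]; rewrite /bub_edge /= ?andbF. Qed.
Lemma e_wy w t : e w (yv t) = false.
Proof. by case: w => [[?|?]|[??]]; rewrite /bub_edge /= ?andbF. Qed.
Lemma e_yx t s : e (yv t) (xv s) = false.
Proof. by rewrite /bub_edge /= ?andbF. Qed.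
Lemma e_yy t t' : e (yv t) (yv t') = false.
Proof. by rewrite /bub_edge /= ?andbF. Qed.
Lemma e_px s t s' : e (pv s t) (xv s') = (s == s').
Proof. by rewrite /bub_edge. Qed.
Lemma e_yp t s t' : e (yv t) (pv s t') = (t == t').
Proof. by rewrite /bub_edge. Qed.
Lemma e_pp s t s' t' :
  e (pv s t) (pv s' t') = [&& (s, t) != (s', t'), s' <= s & t <= t'].
Proof. by rewrite /bub_edge. Qed.

Lemma C1 X Y s t : maximal_orthogonal_pair e X Y -> pv s t \in X -> xv s \in X.
Proof.
move=> HM pX; apply: (add_vertex HM pX); first by rewrite e_px.
by move=> w; rewrite e_xw.
Qed.

Lemma C2 X Y s t (t' : 'I_n) : maximal_orthogonal_pair e X Y -> pv s t \in X ->
  (t < t')%N -> pv s t' \in X.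
Proof.
move=> HM pX tt'; apply: (add_vertex HM pX).
  rewrite e_pp leqnn (ltnW tt') !andbT xpair_eqE negb_and eqxx /=.
  by rewrite neq_ltn tt'.
case=> [[s'|t'']|[s'' t'']].
- by rewrite !e_px.
- by rewrite !e_wy.
- rewrite !e_pp => /and3P [_ h1 h2]; rewrite h1 (leq_trans (ltnW tt') h2) andbT /=.
  rewrite andbT xpair_eqE negb_and; apply/orP; right.
  by rewrite neq_ltn (leq_trans tt' h2).
Qed.


Definition lev (X : {set V}) s := \max_(t : 'I_n | pv s t \in X) (n - t).
Definition rowc (X : {set V}) s := if xv s \in X then (lev X s).+1 else 0.
Definition coord (X : {set V}) (i : 'I_(m + n)) : nat :=
  match fintype.split i with inl s => rowc X s | inr t => nat_of_bool (yv t \in X) end.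

Lemma coord_mono (X X' : {set V}) i : X \subset X' -> coord X i <= coord X' i.
Proof.
move=> /subsetP sub; rewrite /coord; case: (fintype.split i) => [s|t].
  rewrite /rowc; case: ifP => xX //; rewrite (sub _ xX) ltnS.
  apply/bigmax_leqP => t tX; apply: leq_bigmax_cond; exact: sub.
by case yX: (yv t \in X); rewrite // (sub _ yX).
Qed.

Lemma coord_rev (p q : {set V} * {set V}) : maximal_orthogonal_pair e p.1 p.2 ->
  maximal_orthogonal_pair e q.1 q.2 ->
  (forall i, coord p.1 i <= coord q.1 i) -> p.1 \subset q.1.
Proof.
move=> Hp Hq H; apply/subsetP; case=> [[s|t]|[s t]] vX.
- have := H (lshift n s); rewrite /coord (unsplitK (inl s)) /rowc.
  by rewrite -/(xv s) vX; case: ifP.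
- have := H (rshift m t); rewrite /coord (unsplitK (inr t)) /=.
  by rewrite -/(yv t) vX; case: (yv t \in q.1).
- rewrite -/(pv s t) in vX *.
  have xX := C1 Hp vX.
  have := H (lshift n s); rewrite /coord (unsplitK (inl s)) /rowc xX.
  case: ifP => // xq; rewrite ltnS => Hl.
  have H1 : n - t <= lev p.1 s by apply: (leq_bigmax_cond (F := fun t : 'I_n => n - t)).
  apply/negPn/negP => pq.
  have H2 : lev q.1 s <= (n - t).-1.
    apply/bigmax_leqP => t' tq.
    have tt' : t < t'.
      rewrite ltnNge leq_eqVlt; apply/negP => /orP [/eqP E | lt].
        by move: tq pq; rewrite (val_inj E) => ->.
      by move: pq; rewrite (C2 Hq tq lt).
    have := ltn_ord t'; lia.
  have := ltn_ord t; lia.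
Qed.

End Bub.

Theorem proposition4p4 (m n : nat) :
  LG_order_dimension (@bub_edge m n) (m + n).
Proof.
split.
  exists (fun p i => INR (coord p.1 i)) => p q Hp Hq; split.
    by move=> le i; apply: le_INR; apply/leP; apply: coord_mono.
  move=> H; apply: (coord_rev Hp Hq) => i; apply/leP; apply: INR_le; exact: H.
move=> d Hd.
pose g (i : 'I_(m + n)) : bub_vertex m n :=
  match fintype.split i with inl s => xv n s | inr t => yv m t end.
have ginj : injective g.
  move=> i j; rewrite /g -{2}(splitK i) -{2}(splitK j).
  by case: (fintype.split i) => a; case: (fintype.split j) => b // [] ->.
apply: (@lower _ _ _ _ g ginj _ _ _ Hd).
- move=> i w; rewrite /g; case: (fintype.split i) => [s|t]; first by rewrite e_xw.
  case: w => [[s'|t']|[s' t']]; try by rewrite /bub_edge /= ?andbF.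
  change (bub_edge (yv m t) (pv s' t') -> exists z, [/\ bub_edge (pv s' t') z, z != yv m t & ~~ bub_edge (yv m t) z]).
  rewrite e_yp => /eqP <-; exists (xv n s'); split; by rewrite ?e_px ?e_yx.
- move=> i w; rewrite /g; case: (fintype.split i) => [s|t]; last by rewrite e_wy.
  case: w => [[s'|t']|[s' t']]; try by rewrite /bub_edge /= ?andbF.
  change (bub_edge (pv s' t') (xv n s) -> exists z, [/\ bub_edge z (pv s' t'), z != xv n s & ~~ bub_edge z (xv n s)]).
  rewrite e_px => /eqP ->; exists (yv m t'); split; by rewrite ?e_yp ?e_yx.
- move=> i j; rewrite /g; case: (fintype.split i) => a; case: (fintype.split j) => b;
  by rewrite ?e_xw ?e_wy ?e_yx ?e_yy.
Qed.
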